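(* Let $X$ be a nontrivial real Hausdorff locally convex space, let $g\in\Gamma(X)$ be sublinear and let $x^{\ast}\in X^{\ast}$. Set $L_{x^{\ast}}:=\{x\in X: g(x)=\langle x,x^{\ast}\rangle,\ g(-x)=-\langle x,x^{\ast}\rangle\}$. The following assertions are equivalent: (a) $x^{\ast}\in\operatorname{qri}\partial g(0)$; (b) $[g\le x^{\ast}]$ is a linear space; (b') $L_{x^{\ast}}=[g\le x^{\ast}]$; (c) $x^{\ast}\in\partial g(0)$ and $[g=x^{\ast}]$ is a linear space; (c') $x^{\ast}\in\partial g(0)$ and $L_{x^{\ast}}=[g=x^{\ast}]$.
   Context: $X^{\ast}$ is the topological dual of $X$ endowed with the weak$^{\ast}$ topology; closures in $X^{\ast}$ are weak$^{\ast}$ closures; $\langle x,x^{\ast}\rangle:=x^{\ast}(x)$. $\Gamma(X)$ is the set of proper lower semicontinuous convex functions $X\to\mathbb{R}\cup\{\pm\infty\}$. $\partial g(0)=\{x^{\ast}:\langle x',x^{\ast}\rangle\le g(x')\ \forall x'\in X\}$. $[g\le x^{\ast}]:=\{x\in X: g(x)\le\langle x,x^{\ast}\rangle\}$, $[g=x^{\ast}]:=\{x\in X: g(x)=\langle x,x^{\ast}\rangle\}$. For convex $B\subset X^{\ast}$, $\operatorname{qri}B=\{b\in B:\overline{\mathbb{R}_+(B-b)}\text{ is a linear subspace}\}$. *)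

(* Defs.v *)
From HB Require Import structures.
From mathcomp Require Import all_boot all_order all_algebra.
From mathcomp Require Import all_classical all_reals all_analysis.
Set Implicit Arguments. Unset Strict Implicit. Unset Printing Implicit Defensive.
Import Order.TTheory GRing.Theory Num.Theory numFieldTopology.Exports numFieldNormedType.Exports.
Local Open Scope classical_set_scope.
Local Open Scope ring_scope.

Section Defs.
Context {R : realType} {X : tvsType R}.

Definition cont_dual : set (X -> R) :=
  [set f | (forall (a : R) (x y : X), f (a *: x + y) = a * f x + f y)
           /\ forall x : X, continuous_at x f].

(* weak-star closure in X^* : closure for the topology of pointwise
   convergence on X (the weak* topology is the trace of it on X^* ) *)
Definition wstar_closure (S : set (X -> R)) : set (X -> R) :=
  [set f | cont_dual f /\ @closure {ptws X -> R} S f].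

Definition dual_linear_subspace (S : set (X -> R)) : Prop :=
  [/\ S (fun _ => 0),
      (forall f h, S f -> S h -> S (fun x => f x + h x)) &
      (forall (a : R) f, S f -> S (fun x => a * f x))].

Definition is_linear_subspace (S : set X) : Prop :=
  [/\ S 0, (forall x y, S x -> S y -> S (x + y)) &
      (forall (a : R) x, S x -> S (a *: x))].

Definition cone_at (B : set (X -> R)) (b : X -> R) : set (X -> R) :=
  [set f | exists t : R, 0 <= t /\
     exists2 c, B c & f = (fun x => t * (c x - b x))].

Definition qri (B : set (X -> R)) : set (X -> R) :=
  [set b | B b /\ dual_linear_subspace (wstar_closure (cone_at B b))].

Local Open Scope ereal_scope.

Definition proper_fun (g : X -> \bar R) : Prop :=
  (forall x, g x != -oo) /\ (exists x, g x != +oo).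

Definition econvex (g : X -> \bar R) : Prop :=
  forall (t : R) (x y : X), (0 < t < 1)%R ->
    g ((t *: x + (1 - t) *: y)%R) <= t%:E * g x + (1 - t)%:E * g y.

Definition esublinear (g : X -> \bar R) : Prop :=
  (forall (t : R) x, (0 < t)%R -> g ((t *: x)%R) = t%:E * g x) /\
  (forall x y, g ((x + y)%R) <= g x + g y).

Definition subdiff0 (g : X -> \bar R) : set (X -> R) :=
  [set f | cont_dual f /\ forall x, (f x)%:E <= g x].

Definition g_le_set (g : X -> \bar R) (f : X -> R) : set X :=
  [set x | g x <= (f x)%:E].
Definition g_eq_set (g : X -> \bar R) (f : X -> R) : set X :=
  [set x | g x = (f x)%:E].
Definition Lset (g : X -> \bar R) (f : X -> R) : set X :=
  [set x | g x = (f x)%:E /\ g ((- x)%R) = (- f x)%:E].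

End Defs.

(* Main.v *)
Require Import Defs.
From HB Require Import structures.
From mathcomp Require Import all_boot all_order all_algebra.
From mathcomp Require Import all_classical all_reals all_analysis.
From mathcomp Require Import ring lra.
Set Implicit Arguments. Unset Strict Implicit. Unset Printing Implicit Defensive.
Import Order.TTheory GRing.Theory Num.Theory numFieldTopology.Exports numFieldNormedType.Exports.
Local Open Scope classical_set_scope.
Local Open Scope ring_scope.
Section Inf.
Context {R : realType}.
Lemma inf_le (E : set R) x : has_lbound E -> E x -> inf E <= x.
Proof. by move=> hE Ex; apply: ge_inf. Qed.
Lemma le_inf (E : set R) b : E !=set0 -> (forall y, E y -> b <= y) -> b <= inf E.
Proof. by move=> hE hb; apply: lb_le_inf. Qed.
End Inf.

Section AHB.
Context {R : realType} {V : lmodType R}.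
Definition sublin (p : V -> R) :=
  (forall x y, p (x + y) <= p x + p y) /\ (forall t x, 0 < t -> p (t *: x) = t * p x).

Lemma sublin0 p : sublin p -> p 0 = 0.
Proof.
move=> [_ h]; have := h 2 0 (ltr0Sn R 1); rewrite scaler0 => e; lra.
Qed.

Lemma sublinZ p t x : sublin p -> 0 <= t -> p (t *: x) = t * p x.
Proof.
move=> hp; rewrite le_eqVlt => /orP[/eqP <-|]; last by apply hp.
by rewrite scale0r mul0r sublin0.
Qed.

Lemma sublinN p x : sublin p -> 0 <= p x + p (- x).
Proof. by move=> hp; rewrite -(sublin0 hp) -{1}(subrr x); apply hp. Qed.

Definition shift (p : V -> R) (z : V) (x : V) :=
  inf [set p (x + s *: z) - s * p z | s in [set s : R | 0 <= s]].

Lemma shift_lb p z x : sublin p ->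
  forall y, [set p (x + s *: z) - s * p z | s in [set s : R | 0 <= s]] y -> - p (- x) <= y.
Proof.
move=> hp _ [s /= s0 <-].
have := hp.1 (x + s *: z) (- x); rewrite addrC addKr (sublinZ _ hp s0) => h.
lra.
Qed.

Lemma shift_hasl p z x : sublin p ->
  has_lbound [set p (x + s *: z) - s * p z | s in [set s : R | 0 <= s]].
Proof. by move=> hp; exists (- p (- x)) => y /(shift_lb hp). Qed.

Lemma shift_ne (p : V -> R) (z x : V) :
  [set p (x + s *: z) - s * p z | s in [set s : R | 0 <= s]] !=set0.
Proof. exists (p x); exists 0; first exact: lexx. by rewrite scale0r addr0 mul0r subr0. Qed.

Lemma shift_le p z x s : sublin p -> 0 <= s ->
  shift p z x <= p (x + s *: z) - s * p z.
Proof. by move=> hp s0; apply: inf_le; [exact: shift_hasl|exists s]. Qed.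

Lemma le_shift p z x b : (forall s, 0 <= s -> b <= p (x + s *: z) - s * p z) ->
  b <= shift p z x.
Proof. by move=> h; apply: le_inf; [exact: shift_ne|move=> _ [s s0 <-]; apply: h]. Qed.

Lemma shift_sublin p z : sublin p -> sublin (shift p z).
Proof.
move=> hp; split.
- move=> x y.
  suff: forall s1, 0 <= s1 -> shift p z (x + y) - shift p z y <= p (x + s1 *: z) - s1 * p z.
    by move=> h; have := le_shift h; lra.
  move=> s1 s10.
  suff: forall s2, 0 <= s2 -> shift p z (x + y) - (p (x + s1 *: z) - s1 * p z)
           <= p (y + s2 *: z) - s2 * p z.
    by move=> h; have := le_shift h; lra.
  move=> s2 s20.
  have := shift_le z (x + y) hp (addr_ge0 s10 s20).
  have := hp.1 (x + s1 *: z) (y + s2 *: z).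
  have -> : x + s1 *: z + (y + s2 *: z) = x + y + (s1 + s2) *: z.
    by rewrite scalerDl; rewrite addrACA.
  rewrite mulrDl; lra.
- move=> t x t0; apply/eqP; rewrite eq_le; apply/andP; split.
  + rewrite -ler_pdivrMl //; apply: le_shift => s s0.
    rewrite ler_pdivrMl //.
    have := shift_le z (t *: x) hp (mulr_ge0 (ltW t0) s0).
    by rewrite -scalerA -scalerDr hp.2 // -mulrA -mulrBr.
  + apply: le_shift => s s0.
    have s0' : 0 <= s / t by apply: divr_ge0 => //; exact: ltW.
    have := shift_le z x hp s0'.
    have tn0 : t != 0 by rewrite gt_eqF.
    have e1 : t * p (x + (s / t) *: z) = p (t *: x + s *: z).
      by rewrite -hp.2 // scalerDr scalerA [t * (s / t)]mulrC divfK.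
    have e2 : t * (s / t * p z) = s * p z by rewrite mulrA [t * _]mulrC divfK.
    by rewrite -(ler_pM2l t0) mulrBr e1 e2.
Qed.

Lemma shift_le_p p z x : sublin p -> shift p z x <= p x.
Proof. by move=> hp; have := shift_le z x hp (lexx 0); rewrite scale0r addr0 mul0r subr0. Qed.

Lemma shift_neg p z : sublin p -> shift p z (- z) <= - p z.
Proof.
move=> hp; have := shift_le z (- z) hp ler01.
by rewrite scale1r addNr (sublin0 hp) mul1r sub0r.
Qed.

End AHB.
Section AHB2.
Context {R : realType} {V : lmodType R}.
Definition islin (f : V -> R) := forall a x y, f (a *: x + y) = a * f x + f y.

Lemma minimal_lin (f : V -> R) : sublin f -> (forall z x, f x <= shift f z x) -> islin f.
Proof.
move=> hf hmin.
have fN z : f (- z) = - f z.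
  have := hmin z (- z); have := shift_neg z hf; have := sublinN z hf; lra.
have fD x y : f (x + y) = f x + f y.
  have h1 := hf.1 x y; have h2 := hf.1 (- x) (- y).
  rewrite -opprD !fN in h2; lra.
move=> a x y; rewrite fD; congr (_ + _).
have [a0|a0] := leP 0 a; first by rewrite (sublinZ _ hf a0).
have -> : a *: x = - ((- a) *: x) by rewrite scaleNr opprK.
by rewrite fN (sublinZ _ hf) ?oppr_ge0 ?ltW // mulNr opprK.
Qed.

Theorem AHB (p : V -> R) (v0 : V) : sublin p ->
  exists f, islin f /\ (forall x, f x <= p x) /\ f v0 = p v0.
Proof.
move=> hp.
pose p0 := shift p v0.
have hp0 : sublin p0 := shift_sublin v0 hp.
pose P q := sublin q /\ forall x, q x <= p0 x.
pose T := {q : V -> R | P q}.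
pose Rel := fun a b : T => `[< forall x, sval b x <= sval a x >].
have t0 : T by exists p0; split => // x; exact: lexx.
have [t tmax] : exists t, premaximal (fun a b => Rel a b) t.
apply: (@ZL_preorder T t0 Rel).
- by move=> a; apply/asboolP => x; exact: lexx.
- move=> a b c /asboolP hab /asboolP hbc; apply/asboolP => x.
  exact: le_trans (hbc x) (hab x).
- move=> A Atot.
  have [[a0 Aa0]|A0] := pselect (A !=set0); last first.
    by exists t0 => s As; exfalso; apply: A0; exists s.
  pose S x := [set sval a x | a in A].
  have Slb x y : S x y -> - p0 (- x) <= y.
    move=> [a Aa <-]; have [ha hle] := svalP a.
    have := sublinN x ha; have := hle (- x); lra.
  have Shas x : has_lbound (S x) by exists (- p0 (- x)) => y /Slb.
  have Sne x : S x !=set0 by exists (sval a0 x); exists a0.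
  pose m x := inf (S x).
  have mle x a : A a -> m x <= sval a x by move=> Aa; apply: inf_le => //; exists a.
  have hm : sublin m.
    split.
    - move=> x y.
      have key : forall a1 a2, A a1 -> A a2 -> m (x + y) <= sval a1 x + sval a2 y.
        move=> a1 a2 A1 A2.
        have [/asboolP h|/asboolP h] := Atot _ _ A1 A2.
        + have [ha _] := svalP a2.
          have := ha.1 x y; have := h x; have := mle (x + y) _ A2; lra.
        + have [ha _] := svalP a1.
          have := ha.1 x y; have := h y; have := mle (x + y) _ A1; lra.
      suff : m (x + y) - m y <= m x by lra.
      apply: le_inf => // _ [a1 A1 <-].
      suff : m (x + y) - sval a1 x <= m y by lra.
      apply: le_inf => // _ [a2 A2 <-].
      have := key _ _ A1 A2; lra.
    - move=> s x s0; apply/eqP; rewrite eq_le; apply/andP; split.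
      + rewrite -ler_pdivrMl //; apply: le_inf => // _ [a Aa <-].
        rewrite ler_pdivrMl //; have [ha _] := svalP a.
        by rewrite -ha.2 //; apply: mle.
      + apply: le_inf => // _ [a Aa <-]; have [ha _] := svalP a.
        by rewrite ha.2 // ler_pM2l //; apply: mle.
  have mT : P m.
    split => // x; have [ha hle] := svalP a0.
    exact: le_trans (mle x _ Aa0) (hle x).
  exists (exist _ m mT) => s As; apply/asboolP => x /=.
  exact: mle.
have [hf hfle] := svalP t.
set f := sval t in hf hfle.
have flin : islin f.
  apply: minimal_lin => // z.
  have sP : P (shift f z).
    split; first exact: shift_sublin.
    move=> x; exact: le_trans (shift_le_p z x hf) (hfle x).
  have := tmax (exist _ _ sP).
  have -> : Rel t (exist _ _ sP) by apply/asboolP => x /=; exact: shift_le_p.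
  by move=> /(_ isT) /asboolP.
have fp x : f x <= p x := le_trans (hfle x) (shift_le_p _ _ hp).
exists f; split => //; split => //.
have h1 := hfle (- v0); have h2 := shift_neg v0 hp; have h3 := fp v0.
have fN : f (- v0) = - f v0.
  have := flin (-1) v0 0; rewrite scaleN1r addr0 mulN1r (sublin0 hf) addr0.
  by [].
rewrite fN in h1; rewrite -/p0 in h2; lra.
Qed.
End AHB2.
Section SepA.
Context {R : realType} {X : tvsType R}.
Local Open Scope convex_scope.

Lemma conv_mem (C : set X) u w l : convex_set C -> C u -> C w -> 0 <= l -> l <= 1 ->
  C (l *: u + (1 - l) *: w).
Proof.
move=> cC Cu Cw l0 l1.
have := cC u w (Itv01 l0 l1); rewrite !inE => /(_ Cu Cw). by [].
Qed.

Lemma scale_small (V : set X) (x : X) : nbhs 0 V -> exists2 a, 1 <= a & V (a^-1 *: x).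
Proof.
move=> V0; have /= := scale_continuous (0, x) V.
rewrite scale0r => /(_ V0) [] /= B [B1 B2] BU.
have [e e0 he] := (nbhs_ballP _ _).1 B1.
pose t := Num.min (e / 2) 1.
have t0 : 0 < t by rewrite /= in e0; rewrite lt_min ltr01 andbT divr_gt0.
have t1 : t <= 1 by rewrite ge_min lexx orbT.
have e2 : e / 2 < e by rewrite /= in e0; lra.
have te : t < e by rewrite gt_min e2.
exists t^-1; first by rewrite invf_ge1.
rewrite invrK; apply: (BU (t, x)); split => /=; last exact: nbhs_singleton.
apply: he; rewrite -ball_normE /= sub0r normrN gtr0_norm //.
Qed.

Lemma convex_nbhs (W : set X) : nbhs 0 W -> exists V : set X,
  [/\ nbhs 0 V, V `<=` W,
      (forall u w l, V u -> V w -> 0 <= l -> l <= 1 -> V (l *: u + (1 - l) *: w)) &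
      forall v, V v -> V (- v)].
Proof.
move=> W0; have [B Bc Bb] := @locally_convex R X.
have [C [BC C0] CW] := Bb.2 0 W W0.
have oC := Bb.1 C BC.
have cC := Bc C (mem_set BC).
have nC : nbhs 0 C by apply: open_nbhs_nbhs.
exists [set v | C v /\ C (- v)]; split.
- apply: (filterS _ (filterI nC (nbhs0N nC))) => v [Cv [u Cu e]].
  by split => //; rewrite -e opprK.
- by move=> v /= [Cv _]; apply: CW.
- move=> u w l /= [Cu Cu'] [Cw Cw'] l0 l1; split; first exact: conv_mem.
  by rewrite opprD -!scalerN; apply: conv_mem.
- by move=> v /= [Cv Cv']; split; rewrite ?opprK.
Qed.
End SepA.
Section SepA2.
Context {R : realType} {X : tvsType R}.

Lemma esub0 (g : X -> \bar R) : (forall x, g x != -oo%E) -> (exists x, g x != +oo%E) ->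
  lower_semicontinuous g -> esublinear g -> g 0 = 0%E.
Proof.
move=> gN [x1 gx1] glsc [gh gadd].
have e2 := gh 2 0 (ltr0Sn R 1); rewrite scaler0 in e2.
move: e2 (gN 0); case E0: (g 0) => [r0| |] //.
- move=> /eqP; rewrite -EFinM eqe => /eqP e _; congr (_%:E); lra.
- move=> _ _; exfalso.
  move: gx1 (gN x1); case E1: (g x1) => [c1| |] //= _ _.
  have [U U0 hU] := glsc 0 (`|c1| + 1) ltac:(by rewrite E0 ltry).
  have [a a1 Ua] := scale_small x1 U0.
  have := hU _ Ua; rewrite gh ?invr_gt0 ?(lt_le_trans ltr01) // E1 -EFinM lte_fin.
  have ai1 : a^-1 <= 1 by rewrite invf_le1 // (lt_le_trans ltr01).
  have ai0 : 0 < a^-1 by rewrite invr_gt0 (lt_le_trans ltr01).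
  have : a^-1 * c1 <= `|c1|.
    apply: le_trans (ler_norm _) _; rewrite normrM gtr0_norm //.
    by rewrite ler_piMl.
  lra.
Qed.

Lemma sepA (g : X -> \bar R) :
  (forall x, g x != -oo%E) -> (exists x, g x != +oo%E) -> lower_semicontinuous g -> esublinear g ->
  forall x0 r, (r%:E < g x0)%E ->
  exists f : X -> R, cont_dual f /\ (forall x, ((f x)%:E <= g x)%E) /\ r < f x0.
Proof.
move=> gN gp glsc gs x0 r rx0.
have g0 := esub0 gN gp glsc gs.
have [gh gadd] := gs.
have [r' rr' r'x0] : exists2 r', r < r' & (r'%:E < g x0)%E.
  move: rx0 (gN x0); case: (g x0) => [gx| |] //= rgx _.
  - move: rgx; rewrite lte_fin => rgx.
    by exists ((r + gx) / 2)%R; [lra | rewrite lte_fin; lra].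
  - by exists (r + 1); [lra | exact: ltry].
have [U1 U10 hU1] := glsc 0 (-1) ltac:(by rewrite g0 lte_fin; lra).
have [U2 U2x0 hU2] := glsc x0 r' r'x0.
have W0 : nbhs 0 (U1 `&` [set v | U2 (x0 + v)]).
  apply: filterI => //.
  have := nbhsB (- x0) U2x0; rewrite addNr; apply: filterS => v [u Uu <-] /=.
  by rewrite addrA subrr add0r.
have [V [V0 VW Vc Vs]] := convex_nbhs W0.
have Vz : V 0 := nbhs_singleton V0.
have Vadd : forall s1 s2 u w, 0 < s1 -> 0 < s2 -> V (s1^-1 *: u) -> V (s2^-1 *: w) ->
    V ((s1 + s2)^-1 *: (u + w)).
  move=> s1 s2 u w s10 s20 Vu Vw.
  have s12 : 0 < s1 + s2 by rewrite addr_gt0.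
  have l0 : 0 <= s1 / (s1 + s2) by rewrite divr_ge0 // ltW.
  have l1 : s1 / (s1 + s2) <= 1 by rewrite ler_pdivrMr // mul1r lerDl ltW.
  have := Vc _ _ _ Vu Vw l0 l1.
  have -> : 1 - s1 / (s1 + s2) = s2 / (s1 + s2).
    by field; rewrite gt_eqF.
  rewrite !scalerA scalerDr.
  have -> : s1 / (s1 + s2) * s1^-1 = (s1 + s2)^-1 by field; rewrite !gt_eqF.
  have -> : s2 / (s1 + s2) * s2^-1 = (s1 + s2)^-1 by field; rewrite !gt_eqF.
  by [].
have Vshr : forall s u, 0 < s -> s <= 1 -> V (s^-1 *: u) -> V u.
  move=> s u s0 s1 Vu; have := Vc _ _ _ Vu Vz (ltW s0) s1.
  by rewrite scalerA divff ?gt_eqF // scale1r scaler0 addr0.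
have glow : forall s y, 0 < s -> V (s^-1 *: y) -> ((- s)%:E < g y)%E.
  move=> s y s0 Vy; have := hU1 _ (VW _ Vy).1.
  have -> : g y = (s%:E * g (s^-1 *: y))%E.
    by rewrite -gh // scalerA divff ?gt_eqF // scale1r.
  case: (g (s^-1 *: y)) => [G| |] //=.
  - by rewrite -EFinM !lte_fin => h; nra.
  - by move=> _; rewrite muleC gt0_mulye ?lte_fin // ltry.
have [a0 a01 Va0] := scale_small x0 V0.
have a00 : 0 < a0 by apply: lt_le_trans a01.
pose c := a0 + `|r| + 2.
have c1 : 1 <= c by rewrite /c; have := normr_ge0 r; lra.
pose Q x := [set z : R | exists y s, [/\ 0 < s, V (s^-1 *: (x - y)) & (g y <= (z - c * s)%:E)%E]].
have key : forall x a y s z, 0 < a -> 0 < s -> V (a^-1 *: x) -> V (s^-1 *: (x - y)) ->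
    (g y <= (z - c * s)%:E)%E -> - (a + s) + c * s < z.
  move=> x a y s z aa0 s0 Vx Vxy gy.
  have Vyx : V (s^-1 *: (y - x)) by rewrite -opprB scalerN; apply: Vs.
  have := Vadd _ _ _ _ aa0 s0 Vx Vyx; rewrite [x + _]addrC subrK => Vy.
  have := lt_le_trans (glow _ _ (addr_gt0 aa0 s0) Vy) gy; rewrite lte_fin; lra.
have Qlb : forall x, has_lbound (Q x).
  move=> x; have [a a1 Va] := scale_small x V0; have a0' : 0 < a by apply: lt_le_trans a1.
  exists (- a) => z [y [s [s0 Vxy gy]]].
  have := key _ _ _ _ _ a0' s0 Va Vxy gy; nra.
have Qne : forall x, Q x !=set0.
  move=> x; have [a a1 Va] := scale_small x V0; have a0' : 0 < a by apply: lt_le_trans a1.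
  exists (c * a), 0, a; split => //; first by rewrite subr0.
  by rewrite g0 subrr.
pose q x := inf (Q x).
have qle : forall x z, Q x z -> q x <= z by move=> x z Qz; apply: inf_le.
have qge : forall x b, (forall z, Q x z -> b <= z) -> b <= q x by move=> x b h; apply: le_inf.
have QD : forall x1 x2 z1 z2, Q x1 z1 -> Q x2 z2 -> Q (x1 + x2) (z1 + z2).
  move=> x1 x2 z1 z2 [y1 [s1 [s10 V1 g1]]] [y2 [s2 [s20 V2 g2]]].
  exists (y1 + y2), (s1 + s2); split; first exact: addr_gt0.
    by rewrite opprD addrACA; apply: Vadd.
  apply: le_trans (gadd _ _) _; apply: le_trans (leeD g1 g2) _.
  by rewrite -EFinD lee_fin; rewrite le_eqVlt; apply/orP; left; apply/eqP; ring.
have QZ : forall t x z, 0 < t -> Q x z -> Q (t *: x) (t * z).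
  move=> t x z t0 [y [s [s0 Vxy gy]]].
  exists (t *: y), (t * s); split; first exact: mulr_gt0.
    rewrite -scalerBr scalerA.
    have -> : (t * s)^-1 * t = s^-1 by field; rewrite !gt_eqF.
    by [].
  rewrite gh //; apply: le_trans (lee_wpmul2l _ gy) _; first by rewrite lee_fin ltW.
  by rewrite -EFinM lee_fin; rewrite le_eqVlt; apply/orP; left; apply/eqP; ring.
have hq : sublin q.
  split.
  - move=> x1 x2.
    suff : q (x1 + x2) - q x2 <= q x1 by lra.
    apply: (qge) => z1 Q1.
    suff : q (x1 + x2) - z1 <= q x2 by lra.
    apply: (qge) => z2 Q2.
    have := qle _ _ (QD _ _ _ _ Q1 Q2); lra.
  - move=> t x t0; apply/eqP; rewrite eq_le; apply/andP; split.
    + rewrite -ler_pdivrMl //; apply: (qge) => z Qz.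
      by rewrite ler_pdivrMl //; apply: (qle); apply: QZ.
    + apply: (qge) => z Qz.
      have ti0 : 0 < t^-1 by rewrite invr_gt0.
      have := QZ _ _ _ ti0 Qz.
      rewrite scalerA mulVf ?gt_eqF // scale1r => /qle.
      by rewrite -(ler_pM2l t0) mulrA divff ?gt_eqF // mul1r.
have qg : forall x gx, g x = gx%:E -> q x <= gx.
  move=> x gx gxE; apply/ler_addgt0Pr => e e0.
  apply: (qle); exists x, (e / c); split.
  - by rewrite divr_gt0 // (lt_le_trans ltr01).
  - by rewrite subrr scaler0.
  - by rewrite gxE lee_fin mulrC divfK ?gt_eqF ?(lt_le_trans ltr01) // addrK.
have qx0 : r < q x0.
  have rr : r < Num.min r' (r + 1) by rewrite lt_min rr'; apply/andP; split => //; lra.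
  apply: (lt_le_trans rr); apply: (qge) => z [y [s [s0 Vxy gy]]].
  have [s1|s1] := leP s 1.
  - have Vxy' := Vshr _ _ s0 s1 Vxy.
    have Vyx : V (y - x0) by rewrite -opprB; apply: Vs.
    have := hU2 _ (VW _ Vyx).2; rewrite /= addrC subrK => hy.
    have := lt_le_trans hy gy; rewrite lte_fin => h.
    have : 0 <= c * s by rewrite mulr_ge0 // ltW // (lt_le_trans ltr01).
    move=> hk; rewrite ge_min; apply/orP; left; lra.
  - have := key _ _ _ _ _ a00 s0 Va0 Vxy gy.
    have hr := ler_norm r; have hr0 := normr_ge0 r.
    move=> hk; rewrite ge_min; apply/orP; right; rewrite /c in hk; nra.
have qup : forall s v, 0 < s -> V (s^-1 *: v) -> q v <= c * s.
  move=> s v s0 Vv; apply: (qle); exists 0, s; split => //; first by rewrite subr0.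
  by rewrite g0 subrr.
have [f [flin [fle fx0]]] := AHB x0 hq.
have fB : forall u w, f (u - w) = f u - f w.
  by move=> u w; rewrite addrC -scaleN1r flin mulN1r addrC.
exists f; split; last split.
- split; first exact: flin.
  move=> x; apply/cvgrPdist_lt => e e0.
  have c0 : 0 < c by apply: lt_le_trans c1.
  pose s := e / (2 * c).
  have s0 : 0 < s by rewrite divr_gt0 // mulr_gt0.
  have N : nbhs x [set y | V (s^-1 *: (x - y))].
    have sn0 : s != 0 by rewrite gt_eqF.
    have := nbhsT x (nbhs0N (nbhs0Z sn0 V0)).
    apply: filterS => _ [_ [_ [v Vv <-] <-] <-] /=.
    by rewrite opprD addNKr opprK scalerA mulVf ?gt_eqF // scale1r.
  apply: filterS N => y Vy.
  have h1 := le_trans (fle _) (qup _ _ s0 Vy).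
  have Vy' : V (s^-1 *: (y - x)) by rewrite -opprB scalerN; apply: Vs.
  have h2 := le_trans (fle _) (qup _ _ s0 Vy').
  rewrite !fB in h1 h2.
  have cs : c * s = e / 2 by rewrite /s; field; rewrite gt_eqF.
  rewrite cs in h1 h2.
  rewrite ltr_norml; apply/andP; split; lra.
- move=> x; case E: (g x) => [gx| |].
  + by rewrite lee_fin; apply: le_trans (fle x) (qg _ _ E).
  + exact: leey.
  + by have := gN x; rewrite E.
- by rewrite fx0.
Qed.
End SepA2.
Section Ptws.
Context {R : realType} {X : tvsType R}.

Lemma clos_le (K : set (X -> R)) (h : X -> R) (x : X) (b : R) :
  (forall k, K k -> k x <= b) -> @closure {ptws X -> R} K h -> h x <= b.
Proof.
move=> hK hcl; rewrite leNgt; apply/negP => bh.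
have tN : nbhs (h x) [set y : R | b < y].
  by apply: open_nbhs_nbhs; split => //; exact: open_gt.
have N := @proj_continuous X (fun _ => R) x h _ tN.
have [k [Kk /= bk]] := hcl _ N.
by have := hK k Kk; rewrite leNgt bk.
Qed.

Lemma clos_of_approx (K : set (X -> R)) (h : X -> R) :
  (forall (s : seq X) e, 0 < e -> exists k, K k /\ forall x, x \in s -> `|h x - k x| < e) ->
  @closure {ptws X -> R} K h.
Proof.
move=> hap B hB.
pose D := [set p : seq X * R | 0 < p.2].
pose Bs (p : seq X * R) :=
  [set k : X -> R | K k /\ forall x, x \in p.1 -> `|h x - k x| < p.2].
pose F := filter_from D Bs.
have FF : Filter F.
  apply: filter_from_filter.
    by exists ([::], 1%R); rewrite /D /=.
  move=> [s1 e1] [s2 e2] /= e10 e20; exists (s1 ++ s2, Num.min e1 e2).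
    by rewrite /D /= lt_min e10 e20.
  move=> k [Kk hk]; split; split => // x xs.
  - have := hk x; rewrite mem_cat xs /= => /(_ isT); rewrite lt_min => /andP[] //.
  - have := hk x; rewrite mem_cat xs orbT => /(_ isT); rewrite lt_min => /andP[] //.
have Fh : {ptws, F --> h}.
  apply/pointwise_cvgP => t.
  apply/cvgrPdist_lt => e e0.
  exists ([:: t], e) => // k [_ hk] /=; apply: hk; by rewrite inE.
have := Fh B hB; move=> [[s e] /= e0 sub].
have [k [Kk hk]] := hap s e e0.
by exists k; split => //; apply: sub; split.
Qed.

Lemma lin_sum (V : lmodType R) (L : V -> R) (n : nat) (a : 'I_n -> R) (v : 'I_n -> V) :
  islin L -> L (\sum_(i < n) a i *: v i) = \sum_(i < n) a i * L (v i).
Proof.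
move=> hL.
have L0 : L 0 = 0 by have := hL 1 0 0; rewrite scale1r addr0 mul1r => h; lra.
elim/big_rec2: _ => // i y1 y2 _ <-.
by rewrite hL.
Qed.

Lemma fin_sep (K0 : set (X -> R)) (h : X -> R) (s : seq X) (e : R) :
  K0 (fun _ => 0) ->
  (forall k1 k2, K0 k1 -> K0 k2 -> K0 (fun x => k1 x + k2 x)) ->
  (forall t k, 0 < t -> K0 k -> K0 (fun x => t * k x)) ->
  (forall k, K0 k -> islin k) -> islin h -> 0 < e ->
  (forall k, K0 k -> exists2 x, x \in s & e <= `|h x - k x|) ->
  exists z, (forall k, K0 k -> k z <= 0) /\ 0 < h z.
Proof.
move=> K00 KD KZ Klin hlin e0 hfar.
pose n := size s.
pose T (k : X -> R) : 'rV[R]_n := \row_(i < n) k (nth 0 s i).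
pose dist (y : 'rV[R]_n) (k : X -> R) := \sum_(i < n) `|y 0 i - k (nth 0 s i)|.
have dist0 : forall y k, 0 <= dist y k by move=> y k; apply: sumr_ge0 => i _.
pose P y := [set dist y k | k in K0].
pose p y := inf (P y).
have Plb : forall y, has_lbound (P y) by move=> y; exists 0 => _ [k _ <-].
have Pne : forall y, P y !=set0 by move=> y; exists (dist y (fun _ => 0)), (fun _ => 0).
have ple : forall y k, K0 k -> p y <= dist y k.
  by move=> y k Kk; apply: inf_le => //; exists k.
have pge : forall y b, (forall k, K0 k -> b <= dist y k) -> b <= p y.
  by move=> y b hb; apply: le_inf => // _ [k Kk <-]; apply: hb.
have distD : forall y1 y2 k1 k2,
    dist (y1 + y2) (fun x => k1 x + k2 x) <= dist y1 k1 + dist y2 k2.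
  move=> y1 y2 k1 k2; rewrite /dist -big_split /=; apply: ler_sum => i _.
  rewrite mxE; have -> : y1 0 i + y2 0 i - (k1 (nth 0 s i) + k2 (nth 0 s i)) =
    (y1 0 i - k1 (nth 0 s i)) + (y2 0 i - k2 (nth 0 s i)) by ring.
  exact: ler_normD.
have distZ : forall t y k, 0 < t -> dist (t *: y) (fun x => t * k x) = t * dist y k.
  move=> t y k t0; rewrite /dist mulr_sumr; apply: eq_bigr => i _.
  by rewrite mxE -mulrBr normrM gtr0_norm.
have hp : sublin p.
  split.
  - move=> y1 y2.
    suff : p (y1 + y2) - p y2 <= p y1 by lra.
    apply: (pge) => k1 K1.
    suff : p (y1 + y2) - dist y1 k1 <= p y2 by lra.
    apply: (pge) => k2 K2.
    have := ple (y1 + y2) _ (KD _ _ K1 K2); have := distD y1 y2 k1 k2; lra.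
  - move=> t y t0; apply/eqP; rewrite eq_le; apply/andP; split.
    + rewrite -ler_pdivrMl //; apply: (pge) => k Kk.
      rewrite ler_pdivrMl // -distZ //; apply: (ple); exact: KZ.
    + apply: (pge) => k Kk.
      have ti0 : 0 < t^-1 by rewrite invr_gt0.
      have := ple y _ (KZ _ _ ti0 Kk).
      have -> : dist (t *: y) k = t * dist y (fun x => t^-1 * k x).
        rewrite -distZ //; rewrite /dist; apply: eq_bigr => i _.
        by rewrite mulrA divff ?gt_eqF // mul1r.
      by rewrite -(ler_pM2l t0).
have [L [Llin [Lle LTh]]] := AHB (T h) hp.
have pTh : e <= p (T h).
  apply: (pge) => k Kk.
  have [x xs ex] := hfar k Kk.
  have ilt : (index x s < n)%N by rewrite index_mem.
  apply: (le_trans ex); rewrite /dist (bigD1 (Ordinal ilt)) //= mxE nth_index //.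
  rewrite lerDl; apply: sumr_ge0 => i _; exact: normr_ge0.
have pTk : forall k, K0 k -> L (T k) <= 0.
  move=> k Kk; apply: (le_trans (Lle _)); apply: (le_trans (ple _ _ Kk)).
  rewrite /dist; rewrite le_eqVlt; apply/orP; left; apply/eqP.
  by apply: big1 => i _; rewrite mxE subrr normr0.
pose z := \sum_(i < n) L 'e_i *: nth 0 s i.
have Lrep : forall c, islin c -> c z = L (T c).
  move=> c hc; rewrite /z (lin_sum _ _ hc) [in RHS](row_sum_delta (T c)).
  rewrite (lin_sum _ _ Llin); apply: eq_bigr => i _; rewrite mxE mulrC //.
exists z; split.
- by move=> k Kk; rewrite Lrep; [exact: pTk | exact: Klin].
- by rewrite Lrep // LTh; lra.
Qed.
End Ptws.
Section Main.
Context {R : realType} {X : tvsType R}.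

Lemma cd_lin (f : X -> R) : cont_dual f -> islin f.
Proof. by case. Qed.

Lemma lin0 (f : X -> R) : islin f -> f 0 = 0.
Proof. by move=> hf; have := hf 1 0 0; rewrite scale1r addr0 mul1r => h; lra. Qed.

Lemma linD (f : X -> R) : islin f -> forall x y, f (x + y) = f x + f y.
Proof. by move=> hf x y; rewrite -[x]scale1r hf mul1r scale1r. Qed.

Lemma linZ (f : X -> R) : islin f -> forall a x, f (a *: x) = a * f x.
Proof. by move=> hf a x; rewrite -[a *: x]addr0 hf (lin0 hf) addr0. Qed.

Lemma linN (f : X -> R) : islin f -> forall x, f (- x) = - f x.
Proof. by move=> hf x; rewrite -scaleN1r (linZ hf) mulN1r. Qed.

Lemma cd_lc (f1 f2 : X -> R) a b : cont_dual f1 -> cont_dual f2 ->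
  cont_dual (fun x => a * f1 x + b * f2 x).
Proof.
move=> [l1 c1] [l2 c2]; split.
- move=> t x y; rewrite l1 l2; ring.
- move=> x; apply: cvgD; apply: cvgM; [exact: cvg_cst | exact: c1 | exact: cvg_cst | exact: c2].
Qed.

Lemma cd_comb (f h : X -> R) t : cont_dual f -> cont_dual h ->
  cont_dual (fun x => t * (f x - h x)).
Proof.
move=> cf ch; have := cd_lc t (- t) cf ch.
have -> : (fun x => t * f x + - t * h x) = (fun x => t * (f x - h x)).
  by apply: funext => x; ring.
by [].
Qed.

End Main.

Unset Implicit Arguments.

Theorem proposition5 (R : realType) (X : tvsType R)
  (hX : hausdorff_space X) (ntX : exists x : X, x != 0)
  (g : X -> \bar R)
  (gp : proper_fun g) (glsc : lower_semicontinuous g) (gc : econvex g)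
  (gs : esublinear g)
  (xs : X -> R) (hxs : cont_dual xs) :
  [/\ qri (subdiff0 g) xs <-> is_linear_subspace (g_le_set g xs),
      qri (subdiff0 g) xs <-> Lset g xs = g_le_set g xs,
      qri (subdiff0 g) xs <->
        (subdiff0 g xs /\ is_linear_subspace (g_eq_set g xs)) &
      qri (subdiff0 g) xs <->
        (subdiff0 g xs /\ Lset g xs = g_eq_set g xs)].
Proof.
have [gN gp'] := gp.
have g0 := esub0 gN gp' glsc gs.
have [gh gadd] := gs.
have xlin := cd_lin hxs.
set S := subdiff0 g. set Le := g_le_set g xs. set Eq := g_eq_set g xs. set L := Lset g xs.
have finle : forall (u : \bar R) (b : R), u != -oo%E -> (u <= b%:E)%E ->
    exists2 a, u = a%:E & a <= b.
  move=> u b; case: u => [a _ h| _ h| //]; first by exists a; rewrite // -lee_fin.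
  by move: h; rewrite leNgt ltry.
have F1 : forall x, (0 <= g x + g (- x)%R)%E.
  by move=> x; have := gadd x (- x); rewrite subrr g0.
have F2 : forall x, (g x <= (xs x)%:E)%E -> (g (- x)%R <= (- xs x)%R%:E)%E -> L x.
  move=> x h1 h2.
  have [a ea a1] := finle _ _ (gN x) h1; have [b eb b1] := finle _ _ (gN (- x)) h2.
  have := F1 x; rewrite ea eb -EFinD lee_fin => h.
  by split; [rewrite ea; congr (_%:E); lra | rewrite eb; congr (_%:E); lra].
have LLe : L `<=` Le by move=> x [h _]; rewrite /Le /g_le_set /= h.
have hL : is_linear_subspace L.
  split.
  - by split; rewrite ?oppr0 g0 (lin0 xlin) ?oppr0.
  - move=> x y [x1 x2] [y1 y2]; apply: F2.
    + by apply: le_trans (gadd _ _) _; rewrite x1 y1 -EFinD (linD xlin).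
    + rewrite opprD; apply: le_trans (gadd _ _) _.
      by rewrite x2 y2 -EFinD (linD xlin) opprD.
  - move=> a x [x1 x2].
    have [a0|a0] := ltP 0 a.
    + split; first by rewrite gh // x1 (linZ xlin) EFinM.
      by rewrite -scalerN gh // x2 (linZ xlin) -EFinM mulrN.
    + have [->|an0] := eqVneq a 0.
        by rewrite scale0r; split; rewrite ?oppr0 g0 (lin0 xlin) ?oppr0.
      have na0 : 0 < - a by rewrite oppr_gt0 lt_neqAle an0.
      split.
      * have -> : a *: x = (- a) *: (- x) by rewrite scaleNr scalerN opprK.
        by rewrite gh // x2 (linZ xlin) (linN xlin) -EFinM.
      * rewrite -scaleNr gh // x1 (linZ xlin) -EFinM; congr (_%:E); ring.
have le_of_S : forall x r, (forall f, S f -> f x <= r) -> (g x <= r%:E)%E.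
  move=> x r h; rewrite leNgt; apply/negP => hx.
  have [f [cf [fle rf]]] := sepA gN gp' glsc gs hx.
  by have := h f (conj cf fle); lra.
have hbS : is_linear_subspace Le -> S xs.
  move=> [_ _ hZ]; split => // x; rewrite leNgt; apply/negP => hx.
  have Lex : Le x by rewrite /Le /g_le_set /=; exact: ltW.
  have := hZ (-1) x Lex; rewrite /Le /g_le_set /= scaleN1r (linN xlin) => h2.
  have [a ea a1] := finle _ _ (gN x) (ltW hx).
  have [b eb b1] := finle _ _ (gN (- x)) h2.
  rewrite ea lte_fin in hx; have := F1 x; rewrite ea eb -EFinD lee_fin; lra.
have hbL : is_linear_subspace Le -> Le = L.
  move=> hLe; apply/seteqP; split; last exact: LLe.
  move=> x Lex; apply: F2 => //.
  have [_ _ hZ] := hLe.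
  by have := hZ (-1) x Lex; rewrite /Le /g_le_set /= scaleN1r (linN xlin).
have hSLe : S xs -> Le = Eq.
  move=> [_ hS]; apply/seteqP; split => x; rewrite /Le /Eq /g_le_set /g_eq_set /= => h.
  - by apply/eqP; rewrite eq_le h hS.
  - by rewrite h.
have hab : qri S xs -> is_linear_subspace Le.
  move=> [Sxs [_ _ hZ]].
  suff -> : Le = L by [].
  apply/seteqP; split; last exact: LLe.
  move=> x Lex; apply: F2 => //.
  apply: le_of_S => f Sf.
  pose k := fun y => 1 * (f y - xs y).
  have Wk : wstar_closure (cone_at S xs) k.
    split; first exact: cd_comb Sf.1 hxs.
    by apply: subset_closure; exists 1; split => //; exists f.
  have [cdk clk] := hZ (-1) k Wk.
  have hk : forall k', cone_at S xs k' -> k' x <= 0.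
    move=> _ [t [t0 [c Sc ->]]] /=.
    have [a ea a1] := finle _ _ (gN x) Lex.
    have := Sc.2 x; rewrite ea lee_fin => ca.
    by rewrite mulr_ge0_le0 // subr_le0; exact: le_trans ca a1.
  have := clos_le hk clk; rewrite /k /= mulN1r mul1r oppr_le0 subr_ge0 => h.
  by rewrite (linN (cd_lin Sf.1)) lerN2.
have hba : is_linear_subspace Le -> qri S xs.
  move=> hLe; have Sxs := hbS hLe; split => //.
  have [_ _ hLeZ] := hLe.
  pose A := [set h : X -> R | cont_dual h /\ forall x, Le x -> h x = 0].
  have cone0 : cone_at S xs (fun _ => 0).
    exists 0; split => //; exists xs => //; apply: funext => y; by rewrite mul0r.
  have coneZ : forall t k, 0 < t -> cone_at S xs k -> cone_at S xs (fun x => t * k x).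
    move=> t _ t0 [u [u0 [c Sc ->]]]; exists (t * u); split; first by rewrite mulr_ge0 // ltW.
    by exists c => //; apply: funext => y; rewrite mulrA.
  have coneD : forall k1 k2, cone_at S xs k1 -> cone_at S xs k2 ->
      cone_at S xs (fun x => k1 x + k2 x).
    move=> _ _ [t1 [t10 [c1 Sc1 ->]]] [t2 [t20 [c2 Sc2 ->]]].
    have [/eqP t12|t12] := eqVneq (t1 + t2) 0.
    - have e1 : t1 = 0 by lra.
      have e2 : t2 = 0 by lra.
      have -> : (fun x => t1 * (c1 x - xs x) + t2 * (c2 x - xs x)) = (fun _ => 0).
        by apply: funext => y; rewrite e1 e2 !mul0r addr0.
      exact: cone0.
    - have tp : 0 < t1 + t2 by rewrite lt_neqAle eq_sym t12 addr_ge0.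
      pose l := t1 / (t1 + t2).
      pose c := fun x => l * c1 x + (1 - l) * c2 x.
      exists (t1 + t2); split; first exact: ltW.
      exists c.
      + split; first exact: cd_lc Sc1.1 Sc2.1.
        move=> x; have h1 := Sc1.2 x; have h2 := Sc2.2 x.
        have l0 : 0 <= l by rewrite divr_ge0 // ltW.
        have l1 : l <= 1 by rewrite ler_pdivrMr // mul1r lerDl.
        move: h1 h2 (gN x); case: (g x) => [G| |] //; rewrite ?lee_fin ?leey // => h1 h2 _.
        rewrite /c; nra.
      + by apply: funext => y; rewrite /c /l; field.
  have coneLin : forall k, cone_at S xs k -> islin k.
    by move=> _ [t [_ [c Sc ->]]] a x y; rewrite (cd_lin Sc.1) xlin; ring.
  have cd0 : cont_dual (fun _ : X => 0 : R).
    split; [move=> a x y; ring | move=> x; exact: cvg_cst].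
  suff -> : wstar_closure (cone_at S xs) = A.
    split.
    - by split => //.
    - move=> f h [cf vf] [ch vh]; split.
      + have -> : (fun x => f x + h x) = (fun x => 1 * f x + 1 * h x).
          by apply: funext => x; rewrite !mul1r.
        exact: cd_lc.
      + by move=> x Lx; rewrite vf ?vh // addr0.
    - move=> a f [cf vf]; split.
      + have -> : (fun x => a * f x) = (fun x => a * f x + 0 * f x).
          by apply: funext => x; rewrite mul0r addr0.
        exact: cd_lc.
      + by move=> x Lx; rewrite vf ?mulr0.
  apply/seteqP; split.
  - move=> h [ch clh]; split => // x Lex.
    have Lnx : Le (- x) by have := hLeZ (-1) x Lex; rewrite scaleN1r.
    have van : forall y, Le y -> forall k, cone_at S xs k -> k y <= 0.
      move=> y Ly _ [t [t0 [c Sc ->]]] /=.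
      have [a ea a1] := finle _ _ (gN y) Ly.
      have := Sc.2 y; rewrite ea lee_fin => ca.
      by rewrite mulr_ge0_le0 // subr_le0; exact: le_trans ca a1.
    have h1 := clos_le (van x Lex) clh.
    have h2 := clos_le (van (- x) Lnx) clh.
    rewrite (linN (cd_lin ch)) oppr_le0 in h2.
    by apply/eqP; rewrite eq_le h1 h2.
  - move=> h [ch hv]; split => //.
    apply: clos_of_approx => s e e0.
    apply: contrapT => hno.
    have hfar : forall k, cone_at S xs k -> exists2 x, x \in s & e <= `|h x - k x|.
      move=> k ck; apply: contrapT => nk; apply: hno; exists k; split => // x xs'.
      rewrite ltNge; apply/negP => ex; apply: nk; by exists x.
    have [z [kz hz]] := fin_sep cone0 coneD coneZ coneLin (cd_lin ch) e0 hfar.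
    have Lez : Le z.
      rewrite /Le /g_le_set /=; apply: le_of_S => f Sf.
      have ck : cone_at S xs (fun y => 1 * (f y - xs y)) by exists 1; split => //; exists f.
      by have := kz _ ck; rewrite /= mul1r subr_le0.
    by have := hv z Lez => e'; rewrite e' ltxx in hz.
split.
- by split; [exact: hab | exact: hba].
- split; first by move=> /hab /hbL ->.
  by move=> e; apply: hba; rewrite -e.
- split.
  + move=> /hab hb; have Sxs := hbS hb; split => //.
    by rewrite -(hSLe Sxs).
  + by move=> [Sxs hE]; apply: hba; rewrite (hSLe Sxs).
- split.
  + move=> /hab hb; have Sxs := hbS hb; split => //.
    by rewrite -(hSLe Sxs) (hbL hb).
  + by move=> [Sxs e]; apply: hba; rewrite (hSLe Sxs) -e.
Qed.
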